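(* Let $(A,\circ,\cap,\sqcup)$ be a right normal band with intersection and override, and define $a\diamond b=a\circ(b\sqcup a)$. If $F$ is a filter of $(A,\circ)$ such that $a\sqcup b\in F$ implies $a\in F$ or $b\in F$ (a prime filter), then $F$ is weakly prime: whenever $a\in F$ and $b\in A$, either $b\in F$ or $a\cap(a\diamond b)\in F$.
   Context: A right normal band with intersection and override $(A,\circ,\cap,\sqcup)$: $(A,\circ)$ a semigroup with $x\circ x=x$, $(x\circ y)\circ z=(y\circ x)\circ z$; $(A,\cap)$ a semilattice; $(x\cap y)\circ x=x\cap y$; $x\circ(y\cap z)=(x\circ y)\cap z$; $s\circ(s\sqcup t)=s$; $((s\sqcup t)\cap t)\sqcup s=s\sqcup t$; $(s\sqcup t)\circ u=(s\circ u)\sqcup(t\circ u)$. Define $f\lesssim g$ iff $g\circ f=f$. A filter of $(A,\circ)$ is a non-empty $F\subseteq A$ closed under $\circ$ with $a\in F$, $a\lesssim b\Rightarrow b\in F$. *)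

(* Defs.v *)
Record RNBIO (A : Type) (comp cap ovr : A -> A -> A) : Prop := {
  comp_assoc : forall x y z, comp (comp x y) z = comp x (comp y z);
  comp_idem : forall x, comp x x = x;
  comp_rnormal : forall x y z, comp (comp x y) z = comp (comp y x) z;
  cap_assoc : forall x y z, cap (cap x y) z = cap x (cap y z);
  cap_comm : forall x y, cap x y = cap y x;
  cap_idem : forall x, cap x x = x;
  ax_cap_comp : forall x y, comp (cap x y) x = cap x y;
  ax_comp_cap : forall x y z, comp x (cap y z) = cap (comp x y) z;
  ax_ovr1 : forall s t, comp s (ovr s t) = s;
  ax_ovr2 : forall s t, ovr (cap (ovr s t) t) s = ovr s t;
  ax_ovr3 : forall s t u, comp (ovr s t) u = ovr (comp s u) (comp t u)
}.

Definition lesim {A : Type} (comp : A -> A -> A) (f g : A) : Prop := comp g f = f.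

Definition is_filter {A : Type} (comp : A -> A -> A) (F : A -> Prop) : Prop :=
  (exists a, F a) /\
  (forall a b, F a -> F b -> F (comp a b)) /\
  (forall a b, F a -> lesim comp a b -> F b).

Definition diamond {A : Type} (comp ovr : A -> A -> A) (a b : A) : A :=
  comp a (ovr b a).

(* Main.v *)
Require Import Defs.
From Stdlib Require Import Setoid.

Lemma le_ovr_l (A : Type) (comp cap ovr : A -> A -> A)
  (HA : RNBIO A comp cap ovr) s t : comp (ovr s t) s = s.
Proof.
  rewrite <- ((ax_ovr1 _ _ _ _ HA) s t) at 2.
  rewrite <- (comp_assoc _ _ _ _ HA), (comp_rnormal _ _ _ _ HA), (comp_assoc _ _ _ _ HA), (comp_idem _ _ _ _ HA).
  apply (ax_ovr1 _ _ _ _ HA).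
Qed.

Lemma le_ovr_r (A : Type) (comp cap ovr : A -> A -> A)
  (HA : RNBIO A comp cap ovr) s t : comp (ovr s t) t = t.
Proof.
  pose proof (le_ovr_l A comp cap ovr HA t s) as H1.
  rewrite (ax_ovr3 _ _ _ _ HA), (comp_idem _ _ _ _ HA) in H1 |- *.
  pose proof ((ax_ovr2 _ _ _ _ HA) t (comp s t)) as H2.
  rewrite H1, (cap_comm _ _ _ _ HA), <- (ax_comp_cap _ _ _ _ HA), (cap_idem _ _ _ _ HA) in H2.
  exact H2.
Qed.

Theorem proposition3p18 (A : Type) (comp cap ovr : A -> A -> A)
  (HA : RNBIO A comp cap ovr) (F : A -> Prop)
  (HF : is_filter comp F)
  (Hprime : forall a b, F (ovr a b) -> F a \/ F b) :
  forall a b, F a -> F b \/ F (cap a (diamond comp ovr a b)).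
Proof.
  intros a b Fa.
  destruct HF as [_ [Hcl Hup]].
  assert (Fba : F (ovr b a)) by (apply (Hup a); [exact Fa | apply (le_ovr_r A comp cap ovr HA)]).
  rewrite <- (ax_ovr2 _ _ _ _ HA) in Fba.
  destruct (Hprime _ _ Fba) as [H|H]; [right|left; exact H].
  pose proof (Hcl _ _ Fa H) as H2.
  rewrite (ax_comp_cap _ _ _ _ HA), (cap_comm _ _ _ _ HA) in H2.
  exact H2.
Qed.
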